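(* Let $q<2$ with $q\neq 1$, let $r\in\mathbb{R}$, and let $a_1,\dots,a_n>0$, $b_1,\dots,b_n>0$. Then $$\left(\sum_{i=1}^n b_i^r\right)^{1-q}\sum_{i=1}^n a_i^r \ln_q\!\left(\frac{a_i^r}{b_i^r}\right)\ \geq\ \left(\sum_{i=1}^n a_i^r\right)\left\{\ln_q\!\left(\sum_{i=1}^n a_i^r\right)-\ln_q\!\left(\sum_{i=1}^n b_i^r\right)\right\}.$$
   Context: For $q\neq 1$ and $x>0$, the $q$-deformed logarithm is $\ln_q(x)=\dfrac{x^{1-q}-1}{1-q}$. *)

(* Defs.v *)
From HB Require Import structures.
From mathcomp Require Import all_boot all_order all_algebra.
From mathcomp Require Import all_classical all_reals all_analysis.
Set Implicit Arguments. Unset Strict Implicit. Unset Printing Implicit Defensive.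
Import Order.TTheory GRing.Theory Num.Theory.
Local Open Scope ring_scope.

Definition lnq {R : realType} (q x : R) : R := (x `^ (1 - q) - 1) / (1 - q).

(* Main.v *)
Require Import Defs.
From HB Require Import structures.
From mathcomp Require Import all_boot all_order all_algebra.
From mathcomp Require Import all_classical all_reals all_analysis.
Import Order.TTheory GRing.Theory Num.Theory.
Local Open Scope ring_scope.
From mathcomp Require Import ring lra.
Lemma wamgm (R : realType) (t u : R) : 0 <= t -> t <= 1 -> 0 < u ->
  u `^ t <= t * u + (1 - t).
Proof.
move=> t0 t1 u0.
have h := @concave_ln R (Itv01 t0 t1) u 1 u0 ltr01.
rewrite !convRE /= ln1 mulr0 addr0 mulr1 in h.
have pos : 0 < t * u + (1 - t) :> R.
  have [->|tn0] := eqVneq t 0; first by rewrite mul0r add0r subr0.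
  have : 0 < t by rewrite lt_neqAle eq_sym tn0 t0.
  move=> tp; apply: (@lt_le_trans _ _ (t * u)); first exact: mulr_gt0.
  by rewrite lerDl subr_ge0.
rewrite /powR gt_eqF //.
by rewrite -(lnK pos) ler_expR.
Qed.

Lemma bern_ge (R : realType) (t u : R) : 1 <= t -> 0 < u ->
  1 + t * (u - 1) <= u `^ t.
Proof.
move=> t1 u0.
have t0 : 0 < t by apply: lt_le_trans t1.
have ti : 0 <= t^-1 by rewrite invr_ge0 ltW.
have ti1 : t^-1 <= 1 by rewrite invf_le1.
have h := @wamgm R t^-1 (u `^ t) ti ti1 (powR_gt0 t u0).
rewrite -powRrM mulfV ?gt_eqF // powRr1 ?(ltW u0) in h.
have h2 := ler_wpM2l (ltW t0) h.
have e : t * (t^-1 * u `^ t + (1 - t^-1)) = u `^ t + t - 1.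
  by field; rewrite gt_eqF.
rewrite e in h2; lra.
all: by [].
Qed.

Lemma bern_le (R : realType) (t u : R) : 0 <= t -> t <= 1 -> 0 < u ->
  u `^ t <= 1 + t * (u - 1).
Proof.
move=> t0 t1 u0; have := @wamgm R t u t0 t1 u0; lra.
Qed.

Lemma sum_pos (R : realType) n (x : 'I_n -> R) : (0 < n)%N -> (forall i, 0 < x i) ->
  0 < \sum_(i < n) x i.
Proof.
move=> n0 xp; rewrite (bigD1 (Ordinal n0)) //=.
apply: (@lt_le_trans _ _ (x (Ordinal n0))); first exact: xp.
by rewrite lerDl; apply: sumr_ge0 => i _; apply: ltW.
Qed.

Lemma key (R : realType) n (x y : 'I_n -> R) (p : R) : (0 < n)%N ->
  (forall i, 0 < x i) -> (forall i, 0 < y i) -> p != 0 -> -1 < p ->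
  0 <= ((\sum_(i < n) y i) `^ p * (\sum_(i < n) x i * (x i / y i) `^ p)
        - (\sum_(i < n) x i) * (\sum_(i < n) x i) `^ p) / p.
Proof.
move=> n0 xp yp p0 p1.
set A := \sum_(i < n) x i; set B := \sum_(i < n) y i.
have A0 : 0 < A by exact: sum_pos.
have B0 : 0 < B by exact: sum_pos.
set c := A / B.
have c0 : 0 < c by rewrite divr_gt0.
set t := p + 1.
set u := fun i => x i / y i / c.
have u0 : forall i, 0 < u i.
  by move=> i; rewrite /u !divr_gt0.
have powS : forall w : R, 0 < w -> w `^ t = w `^ p * w.
  move=> w w0; rewrite /t powRD ?powRr1 ?(ltW w0) //.
  by apply/implyP => _; rewrite gt_eqF.
have hS : \sum_(i < n) x i * (x i / y i) `^ p
          = c `^ t * \sum_(i < n) y i * u i `^ t.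
  rewrite mulr_sumr; apply: eq_bigr => i _.
  have yi := yp i; have xi := xp i.
  have wE : x i / y i = u i * c by rewrite /u; field; rewrite !gt_eqF.
  have w0 : 0 < x i / y i by rewrite divr_gt0.
  have e1 := powS _ w0.
  have e2 : (x i / y i) `^ t = u i `^ t * c `^ t.
    by rewrite wE powRM // ltW.
  have -> : x i * (x i / y i) `^ p = y i * ((x i / y i) `^ p * (x i / y i)).
    by field; rewrite gt_eqF.
  by rewrite -e1 e2; ring.
have hU : \sum_(i < n) y i * u i = B.
  have -> : \sum_(i < n) y i * u i = \sum_(i < n) x i * c^-1.
    apply: eq_bigr => i _; rewrite /u; have := yp i; have := xp i => ??.
    by field; rewrite !gt_eqF.
  by rewrite -mulr_suml -/A /c; field; rewrite !gt_eqF.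
have hBc : B `^ p * c `^ t * B = A * A `^ p.
  rewrite /c powRM ?(ltW A0) ?invr_ge0 ?(ltW B0) //.
  rewrite -powR_inv1 ?(ltW B0) // powRAC powR_inv1 ?powR_ge0 //.
  rewrite !powS //.
  have := powR_gt0 p A0; have := powR_gt0 p B0 => ??.
  by field; rewrite !gt_eqF.
have cp := powR_gt0 t c0.
have Bp := powR_gt0 p B0.
rewrite hS.
have [pg|pl] := ltrP 0 p.
  have t1 : 1 <= t by rewrite /t; lra.
  have hY : B <= \sum_(i < n) y i * u i `^ t.
    apply: (@le_trans _ _ (\sum_(i < n) y i * (1 + t * (u i - 1)))).
      rewrite (eq_bigr (fun i => (1 - t) * y i + t * (y i * u i))); last first.
        by move=> i _; ring.
      by rewrite big_split /= -!mulr_sumr hU -/B; lra.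
    apply: ler_sum => i _; apply: ler_wpM2l; first exact: ltW.
    exact: bern_ge.
  apply: divr_ge0; last exact: ltW.
  rewrite -hBc subr_ge0 -mulrA; apply: ler_wpM2l; first exact: ltW.
  by apply: ler_wpM2l => //; exact: ltW.
have pn : p < 0 by rewrite lt_neqAle p0 pl.
have t0 : 0 <= t by rewrite /t; lra.
have t1 : t <= 1 by rewrite /t; lra.
have hY : \sum_(i < n) y i * u i `^ t <= B.
  apply: (@le_trans _ _ (\sum_(i < n) y i * (1 + t * (u i - 1)))); last first.
    rewrite (eq_bigr (fun i => (1 - t) * y i + t * (y i * u i))); last first.
      by move=> i _; ring.
    by rewrite big_split /= -!mulr_sumr hU -/B; lra.
  apply: ler_sum => i _; apply: ler_wpM2l; first exact: ltW.
  exact: bern_le.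
have hN : B `^ p * (c `^ t * \sum_(i < n) y i * u i `^ t) <= A * A `^ p.
  rewrite -hBc -mulrA; apply: ler_wpM2l; first exact: ltW.
  by apply: ler_wpM2l => //; exact: ltW.
have pi : p^-1 < 0 by rewrite invr_lt0.
rewrite mulrC; apply: mulr_le0; first exact: ltW.
by rewrite subr_le0.
Qed.

Theorem mainTheorem3 (R : realType) (q r : R) (n : nat) (a b : 'I_n -> R) :
  q < 2 -> q != 1 -> (0 < n)%N ->
  (forall i, 0 < a i) -> (forall i, 0 < b i) ->
  (\sum_(i < n) a i `^ r) *
    (lnq q (\sum_(i < n) a i `^ r) - lnq q (\sum_(i < n) b i `^ r))
  <= (\sum_(i < n) b i `^ r) `^ (1 - q) *
     \sum_(i < n) (a i `^ r * lnq q (a i `^ r / b i `^ r)).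
Proof.
move=> q2 q1 n0 ap bp.
have xp : forall i, 0 < a i `^ r by move=> i; apply: powR_gt0.
have yp : forall i, 0 < b i `^ r by move=> i; apply: powR_gt0.
have p0 : 1 - q != 0 by rewrite subr_eq0 eq_sym.
have p1 : -1 < 1 - q by lra.
have K := @key R n (fun i => a i `^ r) (fun i => b i `^ r) _ n0 xp yp p0 p1.
rewrite /= in K.
rewrite /lnq.
set p := 1 - q in K p0 *.
have -> : \sum_(i < n) a i `^ r * (((a i `^ r / b i `^ r) `^ p - 1) / p)
  = (\sum_(i < n) a i `^ r * (a i `^ r / b i `^ r) `^ p
      - \sum_(i < n) a i `^ r) / p.
  rewrite -sumrB mulr_suml; apply: eq_bigr => i _.
  by field.
rewrite -subr_ge0.
set A := \sum_(i < n) a i `^ r in K *.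
set B := \sum_(i < n) b i `^ r in K *.
set S := \sum_(i < n) a i `^ r * (a i `^ r / b i `^ r) `^ p in K *.
have -> : B `^ p * ((S - A) / p) - A * ((A `^ p - 1) / p - (B `^ p - 1) / p)
  = (B `^ p * S - A * A `^ p) / p by field.
exact: K.
Qed.
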